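(* Let $c \geq 5$ be an integer, let $G$ be a graph, and let $v$ be a vertex of $G$ having a neighbor of degree $2$. Let $Y=\{v\}\cup N_{G,1}(v)\cup N_{G,2}(v)$. If $G$ has no PCF $c$-coloring, but $(G,Y)$ has a semi-PCF $c$-coloring, then $2d(v) - 2n_1(v) - n_2(v) \geq c$.
   Context: $N_{G,d}(v)$ is the set of neighbors of $v$ of degree exactly $d$ in $G$, and $n_d(v)=|N_{G,d}(v)|$; $d(v)$ is the degree of $v$ in $G$. A PCF $c$-coloring of a graph is a proper coloring with at most $c$ colors in which every non-isolated vertex has a color appearing exactly once in its open neighborhood. For $Y\subseteq V(G)$, let $Z$ be the set of vertices of $G-Y$ having degree exactly $2$ in $G-Y$. A semi-PCF $c$-coloring of $(G,Y)$ is a proper $c$-coloring $\phi$ of $G-Y$ such that every vertex of $V(G-Y)\setminus (N_G(Y)\cap Z)$ has a color appearing exactly once (under $\phi$) among its neighbors in $G-Y$. *)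

(* Defs.v *)
(* A finite simple graph is a symmetric irreflexive
   relation e on a finite type T. *)
From mathcomp Require Import all_boot.
Set Implicit Arguments. Unset Strict Implicit. Unset Printing Implicit Defensive.

Section Defs.
Variable T : finType.
Variable e : rel T.

Definition nbr (v : T) : {set T} := [set u | e v u].
Definition deg (v : T) : nat := #|nbr v|.

Definition nbr_deg (d : nat) (v : T) : {set T} := [set u in nbr v | deg u == d].
Definition n_deg (d : nat) (v : T) : nat := #|nbr_deg d v|.

Definition has_unique_color (c : nat) (col : T -> 'I_c) (S : {set T}) : Prop :=
  exists k : 'I_c, #|[set u in S | col u == k]| = 1.

Definition is_PCF_coloring (c : nat) (col : T -> 'I_c) : Prop :=
  (forall x y, e x y -> col x <> col y) /\
  (forall v, nbr v != set0 -> has_unique_color col (nbr v)).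

Definition nbr_del (Y : {set T}) (x : T) : {set T} := nbr x :\: Y.

Definition Zset (Y : {set T}) : {set T} :=
  [set x in ~: Y | #|nbr_del Y x| == 2].

Definition nbr_set (Y : {set T}) : {set T} := [set x | [exists y in Y, e x y]].

(* semi-PCF c-colouring of (G,Y): a proper c-colouring of G - Y (only the
   values on V(G) \ Y matter) such that every vertex of
   V(G-Y) \ (N_G(Y) ∩ Z) has a colour appearing exactly once among its
   neighbours in G - Y. *)
Definition is_semi_PCF_coloring (c : nat) (Y : {set T}) (col : T -> 'I_c) : Prop :=
  (forall x y, x \notin Y -> y \notin Y -> e x y -> col x <> col y) /\
  (forall x, x \notin Y -> x \notin (nbr_set Y :&: Zset Y) ->
     has_unique_color col (nbr_del Y x)).

End Defs.

(* Main.v *)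
Require Import Defs.
From mathcomp Require Import all_boot.
From mathcomp Require Import zify.
Set Implicit Arguments. Unset Strict Implicit. Unset Printing Implicit Defensive.

Lemma card_U1 (T : finType) (a : T) (A : {set T}) : #|a |: A| <= #|A|.+1.
Proof. by rewrite cardsU1; case: (a \notin A). Qed.

Lemma card_U (T : finType) (A B : {set T}) : #|A :|: B| <= #|A| + #|B|.
Proof. by rewrite cardsU leq_subr. Qed.

Lemma card4 (T : finType) (a b c d : T) : #|a |: (b |: (c |: [set d]))| <= 4.
Proof.
apply: leq_trans (card_U1 _ _) _; rewrite ltnS.
apply: leq_trans (card_U1 _ _) _; rewrite ltnS.
apply: leq_trans (card_U1 _ _) _; by rewrite cards1.
Qed.

Lemma cardB0 (T : finType) (e : rel T) (v : T) :
  #|nbr e v :\: (nbr_deg e 1 v :|: nbr_deg e 2 v)| + #|nbr_deg e 1 v| + #|nbr_deg e 2 v| = deg e v.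
Proof.
have hdisj : nbr_deg e 1 v :&: nbr_deg e 2 v = set0.
  apply/setP => u; rewrite !inE.
  by case: (e v u); case: eqP => // ->.
have hsub : nbr_deg e 1 v :|: nbr_deg e 2 v \subset nbr e v.
  by apply/subsetP => u; rewrite !inE => /orP [/andP [h _]| /andP [h _]].
have := cardsID (nbr_deg e 1 v :|: nbr_deg e 2 v) (nbr e v).
rewrite (setIidPr hsub) cardsU hdisj cards0 subn0 /deg => h.
lia.
Qed.

Section Construction.
Variables (T : finType) (e : rel T).
Hypotheses (e_sym : symmetric e) (e_irr : irreflexive e).
Variables (c : nat) (v w0 : T) (phi : T -> 'I_c) (i0 : 'I_c).
Local Notation N1 := (nbr_deg e 1 v).
Local Notation N2 := (nbr_deg e 2 v).
Local Notation Y := (v |: (N1 :|: N2)).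
Hypothesis semi : is_semi_PCF_coloring e Y phi.
Hypothesis w0N2 : w0 \in N2.
Hypothesis c5 : 5 <= c.
Definition B := nbr e v :\: (N1 :|: N2).
Hypothesis hc : 2 * #|B| + #|N2| < c.

Lemma inN d u : (u \in nbr_deg e d v) = e v u && (deg e u == d).
Proof. by rewrite /nbr_deg /nbr !inE. Qed.

Lemma inB u : (u \in B) = e v u && (u \notin N1) && (u \notin N2).
Proof. rewrite /B !inE; by case: (e v u); case: (deg e u == 1); case: (deg e u == 2). Qed.

Lemma inY u : (u \in Y) = (u == v) || (u \in N1) || (u \in N2).
Proof. by rewrite !inE orbA. Qed.

Lemma vY : v \in Y.
Proof. by rewrite !inE eqxx. Qed.

Lemma N2_neq_v w : w \in N2 -> w != v.
Proof. rewrite inN => /andP [h _]; apply: contraTneq h => ->; by rewrite e_irr. Qed.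

Lemma N1_nbr u y : u \in N1 -> e u y -> y = v.
Proof.
rewrite inN => /andP [evu /eqP du] euy.
have : #|nbr e u| == 1 by rewrite -du.
case/cards1P => z hz.
have : v \in nbr e u by rewrite /nbr inE e_sym.
have : y \in nbr e u by rewrite /nbr inE.
by rewrite hz !inE => /eqP -> /eqP ->.
Qed.

Definition o w := odflt v [pick u in nbr e w :\ v].

Lemma N2_o w : w \in N2 ->
  [/\ o w != v, e w (o w) & forall y, e w y -> y = v \/ y = o w].
Proof.
rewrite inN => /andP [evw /eqP dw].
have vin : v \in nbr e w by rewrite /nbr inE e_sym.
have c1 : #|nbr e w :\ v| == 1.
  have := cardsD1 v (nbr e w); rewrite vin; rewrite /deg in dw; rewrite dw.
  move=> h; apply/eqP; lia.
case/cards1P: c1 => z hz.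
have oz : o w = z.
  rewrite /o; case: pickP => [u|/(_ z)]; rewrite hz !inE ?eqxx //=.
  by move/eqP.
have zin : z \in nbr e w :\ v by rewrite hz set11.
move: zin; rewrite !inE => /andP [zv ewz].
split; rewrite ?oz //.
move=> y ewy; case: (eqVneq y v) => [->|yv]; [by left | right].
have : y \in nbr e w :\ v by rewrite !inE yv.
by rewrite hz inE => /eqP.
Qed.

Lemma outY_adj x y : x \notin Y -> y \in Y -> e x y ->
  (y = v /\ x \in B) \/ (y \in N2 /\ o y = x).
Proof.
move=> xY; rewrite inY => /orP [/orP [/eqP ->|yN1]|yN2] exy.
- left; split => //; move: xY; rewrite inY inB e_sym exy !negb_or.
  by case/andP => /andP [_ ->] ->.
- have xv : x = v by apply: (N1_nbr yN1); rewrite e_sym.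
  by move: xY; rewrite xv vY.
- right; split => //.
  have [_ _ h] := N2_o yN2.
  case: (h x); first by rewrite e_sym.
  + by move=> xv; move: xY; rewrite xv vY.
  + by move=> ->.
Qed.

Lemma o_inY w : w \in N2 -> o w \in Y -> o w \in N2 /\ o (o w) = w.
Proof.
move=> wN2 owY; have [ov ewo h] := N2_o wN2.
have owN2 : o w \in N2.
  move: owY; rewrite inY (negbTE ov) /= => /orP [owN1|//].
  have wv : w = v by apply: (N1_nbr owN1); rewrite e_sym.
  by move: (N2_neq_v wN2); rewrite wv eqxx.
split => //.
have [_ _ h'] := N2_o owN2.
case: (h' w); first by rewrite e_sym.
- by move=> wv; move: (N2_neq_v wN2); rewrite wv eqxx.
- by move/esym.
Qed.


Definition P (F : {set 'I_c}) := odflt i0 [pick k in ~: F].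

Lemma P_notin (F : {set 'I_c}) : #|F| < c -> P F \notin F.
Proof.
move=> hF.
have : 0 < #|~: F| by have := cardsC F; rewrite card_ord => h; lia.
case/card_gt0P => k kin.
rewrite /P; case: pickP => [k' |/(_ k)]; first by rewrite inE.
by rewrite kin.
Qed.

Lemma P_notin4 (a b c' d : 'I_c) : P (a |: (b |: (c' |: [set d]))) \notin a |: (b |: (c' |: [set d])).
Proof. apply: P_notin; apply: leq_ltn_trans (card4 _ _ _ _) _; lia. Qed.

Definition wit x := [pick k | #|[set u in nbr_del e Y x | phi u == k]| == 1].
Definition kx x := if wit x is Some k then k else phi (odflt v [pick u in nbr_del e Y x]).

Definition Falpha := (phi @: B) :|: (kx @: B) :|: ((fun w => phi (o w)) @: N2).
Definition alpha := P Falpha.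

Lemma alpha_notin : alpha \notin Falpha.
Proof.
apply: P_notin; apply: leq_ltn_trans _ hc; rewrite /Falpha.
have h1 := card_U (phi @: B :|: kx @: B) ((fun w => phi (o w)) @: N2).
have h2 := card_U (phi @: B) (kx @: B).
have h3 := leq_imset_card phi B; have h4 := leq_imset_card kx B.
have h5 := leq_imset_card (fun w => phi (o w)) N2.
apply: (leq_trans h1); rewrite mul2n -addnn; apply: leq_add h5.
by apply: leq_trans h2 _; exact: leq_add h3 h4.
Qed.

Lemma alpha_B x : x \in B -> alpha != phi x /\ alpha != kx x.
Proof.
move=> xB; split; apply: contraNneq alpha_notin => ->; rewrite /Falpha !in_setU.
- by rewrite imset_f.
- by rewrite imset_f // orbT.
Qed.

Lemma alpha_o w : w \in N2 -> alpha != phi (o w).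
Proof.
move=> wN2; apply: contraNneq alpha_notin => ->; rewrite /Falpha !in_setU.
by apply/orP; right; apply/imsetP; exists w.
Qed.

Definition Fbeta := alpha |: (phi (o w0) |: (kx (o w0) |: phi @: B)).
Definition beta := P Fbeta.

Lemma beta_notin : beta \notin Fbeta.
Proof.
apply: P_notin.
have hF : #|Fbeta| <= #|B| + 3.
  rewrite /Fbeta; apply: leq_trans (card_U1 _ _) _; rewrite addn3 !ltnS.
  apply: leq_trans (card_U1 _ _) _; rewrite !ltnS.
  apply: leq_trans (card_U1 _ _) _; rewrite !ltnS.
  exact: leq_imset_card.
apply: leq_ltn_trans hF _.
have : 0 < #|N2| by apply/card_gt0P; exists w0.
lia.
Qed.

Lemma beta_facts : [/\ beta != alpha, beta != phi (o w0), beta != kx (o w0)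
  & forall x, x \in B -> beta != phi x].
Proof.
split; try (apply: contraNneq beta_notin => ->; by rewrite /Fbeta !inE eqxx ?orbT).
move=> x xB; apply: contraNneq beta_notin => ->; rewrite /Fbeta !in_setU1.
by rewrite imset_f ?orbT.
Qed.

Definition W x := [set w in N2 | e x w].
Definition desig x := if w0 \in W x then w0 else odflt w0 [pick w in W x].
Definition d1 x := if w0 \in W x then beta else P (alpha |: (beta |: (phi x |: [set kx x]))).
Definition d2 x := P (alpha |: (beta |: (phi x |: [set if wit x is Some _ then kx x else d1 x]))).
Definition t1 := P (alpha |: (beta |: (alpha |: [set alpha]))).
Definition t2 := P (alpha |: (beta |: (t1 |: [set t1]))).
Definition colY w :=
  if w == w0 then beta
  else if o w \in N2 then
    (if o w == w0 then t1 else if enum_rank w < enum_rank (o w) then t1 else t2)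
  else if w == desig (o w) then d1 (o w) else d2 (o w).
Definition col u :=
  if u == v then alpha else if u \in N1 then t1 else if u \in N2 then colY u else phi u.

Lemma W_w0 x : x != v -> (w0 \in W x) = (o w0 == x).
Proof.
move=> xv; rewrite /W inE w0N2 /=.
have [ov ewo h] := N2_o w0N2.
apply/idP/eqP.
- move=> exw; case: (h x); first by rewrite e_sym.
  + by move=> xv'; move: xv; rewrite xv' eqxx.
  + by move=> ->.
- by move=> <-; rewrite e_sym.
Qed.

Lemma d1_facts x : x != v ->
  [/\ d1 x != alpha, d1 x != phi x, d1 x != kx x & (w0 \notin W x -> d1 x != beta)].
Proof.
move=> xv; rewrite /d1; case: ifP => hw.
- move: hw; rewrite W_w0 // => /eqP <-.
  by have [h1 h2 h3 _] := beta_facts; split => //; rewrite eqxx.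
- have := P_notin4 alpha beta (phi x) (kx x).
  by rewrite !inE !negb_or => /and4P [h1 h2 h3 h4]; split.
Qed.

Lemma d2_facts x : [/\ d2 x != alpha, d2 x != beta, d2 x != phi x &
  d2 x != (if wit x is Some _ then kx x else d1 x)].
Proof.
have := P_notin4 alpha beta (phi x) (if wit x is Some _ then kx x else d1 x).
by rewrite !inE !negb_or => /and4P [h1 h2 h3 h4]; split.
Qed.

Lemma t_facts : [/\ t1 != alpha, t1 != beta, t2 != alpha, t2 != beta & t2 != t1].
Proof.
have := P_notin4 alpha beta alpha alpha.
have := P_notin4 alpha beta t1 t1.
rewrite !inE !negb_or => /and4P [h1 h2 h3 _] /and4P [h1' h2' _ _].
by split.
Qed.

Lemma colY_alpha w : w \in N2 -> colY w != alpha.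
Proof.
move=> wN2; have [t1a t1b t2a t2b t21] := t_facts.
have [ov _ _] := N2_o wN2.
rewrite /colY; case: ifP => _; first by have [] := beta_facts.
case: ifP => _.
- by case: ifP => _ //; case: ifP.
- case: ifP => _; first by have [] := d1_facts ov.
  by have [] := d2_facts (o w).
Qed.

Lemma colY_beta w : w \in N2 -> w != w0 -> colY w != beta.
Proof.
move=> wN2 hw0; have [t1a t1b t2a t2b t21] := t_facts.
have [ov _ _] := N2_o wN2.
rewrite /colY (negbTE hw0); case: ifP => _.
- by case: ifP => _ //; case: ifP.
- case: ifP => hd; last by have [] := d2_facts (o w).
  have [_ _ _ h] := d1_facts ov; apply: h.
  apply: contra hw0 => hW; by move: hd; rewrite /desig hW.
Qed.

Lemma notY_N2 u : u \notin Y -> u \notin N2.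
Proof. by rewrite inY !negb_or => /andP [_ ->]. Qed.

Lemma colY_phio w : w \in N2 -> o w \notin Y -> colY w != phi (o w).
Proof.
move=> wN2 hoY; have [ov _ _] := N2_o wN2.
rewrite /colY; case: ifP => [/eqP->|_]; first by have [] := beta_facts.
rewrite (negbTE (notY_N2 hoY)); case: ifP => _; first by have [] := d1_facts ov.
by have [] := d2_facts (o w).
Qed.

Lemma colY_tri w : w \in N2 -> o w \in N2 -> colY w != colY (o w).
Proof.
move=> wN2 oN2.
have owY : o w \in Y by rewrite inY oN2 !orbT.
have [_ oo] := o_inY wN2 owY.
have [ov ewo _] := N2_o wN2.
have neq : o w != w by apply: contraTneq ewo => ->; rewrite e_irr.
have rne : enum_rank w != enum_rank (o w).
  by apply: contra neq => /eqP /enum_rank_inj h; rewrite -h.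
have [t1a t1b t2a t2b t21] := t_facts.
rewrite /colY oo wN2 oN2.
case: ifP => [/eqP hw|hw]; case: ifP => [/eqP how|how].
- by move: neq; rewrite how hw eqxx.
- by rewrite eq_sym.
- by [].
- case: (ltnP (enum_rank w) (enum_rank (o w))) => h.
  + by rewrite ltnNge (ltnW h) /= eq_sym.
  + have h' : enum_rank (o w) < enum_rank w by rewrite ltn_neqAle h eq_sym rne.
    by rewrite h'.
Qed.

Lemma notY_v u : u \notin Y -> u != v.
Proof. by rewrite inY !negb_or => /andP [/andP [-> _] _]. Qed.

Lemma notY_N1 u : u \notin Y -> u \notin N1.
Proof. by rewrite inY !negb_or => /andP [/andP [_ ->] _]. Qed.

Lemma colY_kx w : w \in N2 -> o w \notin Y -> wit (o w) != None -> colY w != kx (o w).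
Proof.
move=> wN2 hoY hwit; have [ov _ _] := N2_o wN2.
rewrite /colY; case: ifP => [/eqP->|_]; first by have [] := beta_facts.
rewrite (negbTE (notY_N2 hoY)); case: ifP => _; first by have [] := d1_facts ov.
move: hwit (d2_facts (o w)); case: (wit (o w)) => //= k _.
by case.
Qed.

Lemma in_nbr x y : (y \in nbr e x) = e x y.
Proof. by rewrite /nbr inE. Qed.

Lemma mem_sep (A : {set T}) (p : pred T) u : (u \in [set u in A | p u]) = (u \in A) && p u.
Proof. by rewrite inE. Qed.

Lemma in_nbr_del x y : (y \in nbr_del e Y x) = (y \notin Y) && e x y.
Proof. by rewrite /nbr_del in_setD in_nbr. Qed.

Lemma col_v : col v = alpha.
Proof. by rewrite /col eqxx. Qed.

Lemma col_N1 u : u \in N1 -> col u = t1.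
Proof.
move=> uN1; have uv : u != v.
  by move: uN1; rewrite inN => /andP [h _]; apply: contraTneq h => ->; rewrite e_irr.
by rewrite /col (negbTE uv) uN1.
Qed.

Lemma col_N2 w : w \in N2 -> col w = colY w.
Proof.
move=> wN2; have wv := N2_neq_v wN2.
have wN1 : w \notin N1 by move: (wN2); rewrite !inN => /andP [_ /eqP ->]; rewrite andbF.
by rewrite /col (negbTE wv) (negbTE wN1) wN2.
Qed.

Lemma col_out x : x \notin Y -> col x = phi x.
Proof.
move=> xY; by rewrite /col (negbTE (notY_v xY)) (negbTE (notY_N1 xY)) (negbTE (notY_N2 xY)).
Qed.

Lemma col_key x y : e x y -> y \in Y -> col x != col y.
Proof.
have [t1a t1b t2a t2b t21] := t_facts.
move=> exy; rewrite inY => /orP [/orP [/eqP yv | yN1] | yN2].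
- rewrite yv col_v; rewrite yv in exy.
  case: (boolP (x \in N1)) => xN1; first by rewrite col_N1.
  case: (boolP (x \in N2)) => xN2; first by rewrite col_N2 // colY_alpha.
  have xB : x \in B by rewrite inB e_sym exy xN1 xN2.
  have xY : x \notin Y.
    rewrite inY (negbTE xN1) (negbTE xN2) !orbF; apply: contraTneq exy => ->; by rewrite e_irr.
  rewrite col_out //; by have [h _] := alpha_B xB; rewrite eq_sym.
- have xv : x = v by apply: (N1_nbr yN1); rewrite e_sym.
  by rewrite xv col_v col_N1 // eq_sym.
- have [ov _ h] := N2_o yN2.
  case: (h x); first by rewrite e_sym.
  + by move=> ->; rewrite col_v col_N2 // eq_sym colY_alpha.
  + move=> ->; case: (boolP (o y \in Y)) => oY.
    * have [oN2 _] := o_inY yN2 oY.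
      by rewrite !col_N2 // eq_sym colY_tri.
    * by rewrite col_out // col_N2 // eq_sym colY_phio.
Qed.

Lemma col_proper x y : e x y -> col x <> col y.
Proof.
move=> exy; apply/eqP.
case: (boolP (y \in Y)) => yY; first exact: col_key.
case: (boolP (x \in Y)) => xY.
  by rewrite eq_sym; apply: col_key => //; rewrite e_sym.
rewrite !col_out //; apply/eqP; exact: semi.1 x y xY yY exy.
Qed.

Lemma uniq_v : has_unique_color col (nbr e v).
Proof.
have [t1a t1b t2a t2b t21] := t_facts.
exists beta; rewrite (_ : [set u in nbr e v | col u == beta] = [set w0]) ?cards1 //.
apply/setP => u; rewrite mem_sep in_set1 in_nbr.
case: (eqVneq u w0) => [->|hu].
  have := w0N2; rewrite inN => /andP [-> _].
  by rewrite col_N2 // /colY !eqxx.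
case: (boolP (e v u)) => //= evu; apply/negbTE.
case: (boolP (u \in N1)) => uN1; first by rewrite col_N1.
case: (boolP (u \in N2)) => uN2; first by rewrite col_N2 // colY_beta.
have uB : u \in B by rewrite inB evu uN1 uN2.
have uY : u \notin Y.
  rewrite inY (negbTE uN1) (negbTE uN2) !orbF; apply: contraTneq evu => ->; by rewrite e_irr.
rewrite col_out //; have [_ _ _ h] := beta_facts; by rewrite eq_sym h.
Qed.

Lemma uniq_N1 u : u \in N1 -> has_unique_color col (nbr e u).
Proof.
move=> uN1.
exists alpha; rewrite (_ : [set y in nbr e u | col y == alpha] = [set v]) ?cards1 //.
apply/setP => y; rewrite mem_sep in_set1 in_nbr.
case: (eqVneq y v) => [->|yv].
  move: (uN1); rewrite inN => /andP [evu _]; by rewrite e_sym evu col_v eqxx.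
by apply/negbTE; apply: contra yv => /andP [h _]; rewrite (N1_nbr uN1 h).
Qed.

Lemma uniq_N2 w : w \in N2 -> has_unique_color col (nbr e w).
Proof.
move=> wN2; have [ov ewo h] := N2_o wN2.
exists alpha; rewrite (_ : [set y in nbr e w | col y == alpha] = [set v]) ?cards1 //.
apply/setP => y; rewrite mem_sep in_set1 in_nbr.
case: (eqVneq y v) => [->|yv].
  move: (wN2); rewrite inN => /andP [evw _]; by rewrite e_sym evw col_v eqxx.
apply/negbTE/nandP; case: (boolP (e w y)) => ewy; [right | by left].
case: (h y ewy) => [yv'|->]; first by move: yv; rewrite yv' eqxx.
case: (boolP (o w \in Y)) => oY.
- have [oN2 _] := o_inY wN2 oY; by rewrite col_N2 // colY_alpha.
- by rewrite col_out // eq_sym alpha_o.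
Qed.

Lemma allk x : wit x = None -> #|nbr_del e Y x| = 2 ->
  forall u, u \in nbr_del e Y x -> phi u = kx x.
Proof.
move=> hw h2 u hu; rewrite /kx hw.
case: pickP => [p hp | /(_ u)]; last by rewrite hu.
case: (eqVneq (phi u) (phi p)) => // hne.
have h1 : #|[set u' in nbr_del e Y x | phi u' == phi p]| == 1.
  rewrite eqn_leq; apply/andP; split.
  - have hD : #|nbr_del e Y x :\ u| = 1.
      by have := cardsD1 u (nbr_del e Y x); rewrite hu h2 => h; lia.
    apply: (@leq_trans #|nbr_del e Y x :\ u|); last by rewrite hD.
    apply: subset_leq_card; apply/subsetP => z.
    rewrite mem_sep => /andP [hz /eqP hz'].
    rewrite in_setD1 hz andbT; apply: contra_neq hne => hzu.
    by rewrite -hzu hz'.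
  - by apply/card_gt0P; exists p; rewrite mem_sep hp eqxx.
move: hw; rewrite /wit; case: pickP => [k _ //| /(_ (phi p))].
by rewrite h1.
Qed.

Lemma uniq_out x : x \notin Y -> has_unique_color col (nbr e x).
Proof.
move=> xY; have xv := notY_v xY.
case hw: (wit x) => [k|].
- exists k.
  have hk : #|[set u in nbr_del e Y x | phi u == k]| == 1.
    by move: hw; rewrite /wit; case: pickP => // k' hk' [<-].
  rewrite (_ : [set u in nbr e x | col u == k] = [set u in nbr_del e Y x | phi u == k]); first exact/eqP.
  apply/setP => u; rewrite !mem_sep in_nbr_del in_nbr.
  case: (boolP (u \in Y)) => uY /=; last by rewrite col_out.
  apply/negbTE/nandP; case: (boolP (e x u)) => exu; [right | by left].
  have kk : kx x = k by rewrite /kx hw.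
  case: (outY_adj xY uY exu) => [[-> xB] | [uN2 ou]].
  + by rewrite col_v -kk; have [] := alpha_B xB.
  + rewrite col_N2 // -kk -ou; apply: colY_kx => //; by rewrite ou ?hw.
- have hZ : x \in nbr_set e Y :&: Zset e Y.
    apply/negPn/negP => hn; have [k hk] := semi.2 x xY hn.
    by move: hw; rewrite /wit; case: pickP => [k' _ //| /(_ k)]; rewrite hk eqxx.
  case/setIP: hZ => hN; rewrite /Zset inE => /andP [_ /eqP h2].
  have hall := allk hw h2.
  case: (set_0Vmem (W x)) => [W0 | [w wW]].
  + have xB : x \in B.
      move: hN; rewrite /nbr_set inE => /existsP [y /andP [yY exy]].
      case: (outY_adj xY yY exy) => [[_ //] | [yN2 oy]].
      have : y \in W x by rewrite /W inE yN2 exy.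
      by rewrite W0 inE.
    have [ax akx] := alpha_B xB.
    exists alpha; rewrite (_ : [set y in nbr e x | col y == alpha] = [set v]) ?cards1 //.
    apply/setP => u; rewrite mem_sep in_nbr in_set1.
    case: (eqVneq u v) => [->|uv].
      by move: xB; rewrite inB => /andP [/andP [evx _] _]; rewrite e_sym evx col_v eqxx.
    apply/negbTE/nandP; case: (boolP (e x u)) => exu; [right | by left].
    case: (boolP (u \in Y)) => uY.
    * case: (outY_adj xY uY exu) => [[uv' _] | [uN2 ou]]; first by move: uv; rewrite uv' eqxx.
      have : u \in W x by rewrite /W inE uN2 exu.
      by rewrite W0 inE.
    * rewrite col_out // (hall u) ?in_nbr_del ?uY ?exu //.
      by rewrite eq_sym.
  + set z := desig x.
    have zW : z \in W x.
      rewrite /z /desig; case: ifP => // _; case: pickP => // /(_ w).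
      by rewrite wW.
    move: (zW); rewrite /W inE => /andP [zN2 exz].
    have [_ _ zo] := N2_o zN2.
    have oz : o z = x.
      by case: (zo x); [rewrite e_sym | move=> xv'; move: xv; rewrite xv' eqxx | move/esym].
    have [d1a d1p d1k d1b] := d1_facts xv.
    have [d2a d2b d2p d2k] := d2_facts x.
    rewrite hw in d2k.
    exists (d1 x); rewrite (_ : [set y in nbr e x | col y == d1 x] = [set z]) ?cards1 //.
    apply/setP => u; rewrite mem_sep in_nbr in_set1.
    case: (eqVneq u z) => [->|uz].
      rewrite exz col_N2 //= /colY.
      case: ifP => [/eqP zw0|_].
        by rewrite /d1 -zw0 zW /= eqxx.
      by rewrite oz (negbTE (notY_N2 xY)) /z !eqxx.
    apply/negbTE/nandP; case: (boolP (e x u)) => exu; [right | by left].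
    case: (boolP (u \in Y)) => uY.
    * case: (outY_adj xY uY exu) => [[-> _] | [uN2 ou]].
        by rewrite col_v eq_sym.
      have uw0 : u != w0.
        apply: contra uz => /eqP uw0; rewrite /z /desig.
        by rewrite -uw0 (_ : u \in W x) // /W inE uN2 exu.
      rewrite col_N2 // /colY (negbTE uw0) ou (negbTE (notY_N2 xY)).
      by rewrite -/z (negbTE uz).
    * rewrite col_out // (hall u) ?in_nbr_del ?uY ?exu //.
      by rewrite eq_sym.
Qed.

Lemma col_PCF : is_PCF_coloring e col.
Proof.
split; first exact: col_proper.
move=> x _; case: (boolP (x \in Y)) => xY; last exact: uniq_out.
move: xY; rewrite inY => /orP [/orP [/eqP -> | xN1] | xN2].
- exact: uniq_v.
- exact: uniq_N1.
- exact: uniq_N2.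
Qed.

End Construction.

Theorem mainTheorem6 (c : nat) (T : finType) (e : rel T)
  (e_sym : symmetric e) (e_irr : irreflexive e) (v : T) :
  5 <= c ->
  (exists u, e v u /\ deg e u = 2) ->
  let Y := v |: (nbr_deg e 1 v :|: nbr_deg e 2 v) in
  ~ (exists col : T -> 'I_c, is_PCF_coloring e col) ->
  (exists col : T -> 'I_c, is_semi_PCF_coloring e Y col) ->
  c + 2 * n_deg e 1 v + n_deg e 2 v <= 2 * deg e v.
Proof.
move=> hc5 [w0 [evw0 dw0]] Y nopcf [phi semi].
subst Y.
rewrite leqNgt; apply/negP => hlt; apply: nopcf.
have w0N2 : w0 \in nbr_deg e 2 v by rewrite inN evw0 dw0 eqxx.
have i0 : 'I_c := Ordinal (leq_trans (isT : 0 < 5) hc5).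
have hc : 2 * #|B e v| + #|nbr_deg e 2 v| < c.
  have h := cardB0 e v; change (#|B e v| + #|nbr_deg e 1 v| + #|nbr_deg e 2 v| = deg e v) in h.
  rewrite /n_deg in hlt; lia.
exists (col e v w0 phi i0); exact: (col_PCF e_sym e_irr i0 semi w0N2 hc5 hc).
Qed.
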